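(* Let $T_1,T_2$ be $2\times2$ matrices with entries in $\{0,1\}$, neither having a zero row, let $\alpha_i=T_1^{(i)}\otimes T_2^{(i)}$ ($i=1,2$), and suppose $|\alpha_1|=|\alpha_2|=\alpha$ with $\alpha\ge 2$ an integer. Suppose moreover that $k_{1,2}=k_{2,2}=:\beta$. Then $$h(T)=\left(\frac{1-\bar\lambda\,\frac{\ln\beta}{\ln\alpha}}{\lambda^2}\right)\ln\alpha .$$ Furthermore, if $k_{1,2}=k_{2,2}=\alpha$, then $h(T)=\frac{\ln\alpha}{\lambda}$.
   Context: $\lambda=\frac{1+\sqrt5}{2}$ and $\bar\lambda=\frac{1-\sqrt5}{2}$. $T_k^{(i)}$ is the $i$-th row of $T_k$, $(v_1,v_2)\otimes(w_1,w_2)=(v_1w_1,v_1w_2,v_2w_1,v_2w_2)$, and $|\alpha_i|$ is the number of ones in $\alpha_i$. Define $\gamma^{[s_j]}_{i,n}$ ($i,j\in\{1,2\}$, $n\ge0$) by $\gamma^{[s_j]}_{i,0}=1$ and for $n\ge1$ $$\gamma^{[s_1]}_{i,n}=\sum_{j,k=1}^2T_1(i,j)T_2(i,k)\,\gamma^{[s_1]}_{j,n-1}\gamma^{[s_2]}_{k,n-1},\qquad \gamma^{[s_2]}_{i,n}=\sum_{j=1}^2T_1(i,j)\,\gamma^{[s_1]}_{j,n-1}.$$ $k_{i,2}$ is the number of distinct terms in the expression for $\gamma^{[s_2]}_{i,n}$, i.e. the number of $j\in\{1,2\}$ with $T_1(i,j)=1$. Let $l_0=1$, $l_1=2$, $l_{k+1}=l_k+l_{k-1}$,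 $|E_n|=\sum_{k=0}^nl_k$ (number of elements of word length $\le n$ in $G=\langle s_1,s_2\mid s_2s_2=s_2\rangle$), and $h(T)=\limsup_{n\to\infty}\frac{\ln(\gamma^{[s_1]}_{1,n}+\gamma^{[s_1]}_{2,n})}{|E_n|}$ (the paper's entropy of the $G$-vertex shift defined by $T=(T_1,T_2)$). *)

(* Defs.v *)
From Stdlib Require Import Reals List Arith.
From Coquelicot Require Import Coquelicot.
Import ListNotations.
Open Scope R_scope.

Inductive I2 : Set := i1 | i2.

Definition mat2 := I2 -> I2 -> nat.

Definition is01 (T : mat2) : Prop := forall i j, T i j = 0%nat \/ T i j = 1%nat.
Definition no_zero_row (T : mat2) : Prop := forall i, exists j, T i j <> 0%nat.

Definition row (T : mat2) (i : I2) : list nat := [T i i1; T i i2].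

Definition kron2 (v w : list nat) : list nat :=
  flat_map (fun a => map (fun b => (a * b)%nat) w) v.

Definition nones (v : list nat) : nat := length (filter (Nat.eqb 1) v).

Definition alpha_vec (T1 T2 : mat2) (i : I2) : list nat := kron2 (row T1 i) (row T2 i).

Definition k2 (T1 : mat2) (i : I2) : nat := nones (row T1 i).

(* gamma n = (gamma^{[s1]}_{.,n}, gamma^{[s2]}_{.,n}) *)
Fixpoint gamma (T1 T2 : mat2) (n : nat) : (I2 -> nat) * (I2 -> nat) :=
  match n with
  | O => (fun _ => 1%nat, fun _ => 1%nat)
  | S m =>
      let (g1, g2) := gamma T1 T2 m in
      (fun i => (T1 i i1 * T2 i i1 * g1 i1 * g2 i1 + T1 i i1 * T2 i i2 * g1 i1 * g2 i2
               + T1 i i2 * T2 i i1 * g1 i2 * g2 i1 + T1 i i2 * T2 i i2 * g1 i2 * g2 i2)%nat,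
       fun i => (T1 i i1 * g1 i1 + T1 i i2 * g1 i2)%nat)
  end.

Definition gamma1 (T1 T2 : mat2) (i : I2) (n : nat) : nat := fst (gamma T1 T2 n) i.

Fixpoint lseq (k : nat) : nat :=
  match k with
  | O => 1%nat
  | S O => 2%nat
  | S ((S p) as q) => (lseq q + lseq p)%nat
  end.

Fixpoint En (n : nat) : nat :=
  match n with
  | O => lseq 0
  | S m => (En m + lseq (S m))%nat
  end.

Definition entropy (T1 T2 : mat2) : Rbar :=
  LimSup_seq (fun n => ln (INR (gamma1 T1 T2 i1 n + gamma1 T1 T2 i2 n)) / INR (En n)).

Definition lam : R := (1 + sqrt 5) / 2.
Definition lambar : R := (1 - sqrt 5) / 2.

(* Main.v *)
Require Import Defs.
From Stdlib Require Import Reals List Arith Lia Lra Psatz.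
From Coquelicot Require Import Coquelicot.
Open Scope R_scope.

Fixpoint ab (al be n : nat) : nat * nat :=
  match n with
  | O => (1%nat, 1%nat)
  | S m => let (a, b) := ab al be m in ((al * a * b)%nat, (be * a)%nat)
  end.

Lemma row_facts (T1 T2 : mat2) (i : I2) (al : nat) :
  is01 T1 -> is01 T2 -> nones (alpha_vec T1 T2 i) = al ->
  (T1 i i1 * T2 i i1 + T1 i i1 * T2 i i2 + T1 i i2 * T2 i i1 + T1 i i2 * T2 i i2 = al)%nat.
Proof.
  intros H1 H2 h.
  unfold nones, alpha_vec, kron2, row in h; simpl in h.
  destruct (H1 i i1) as [e1|e1]; destruct (H1 i i2) as [e2|e2];
  destruct (H2 i i1) as [e3|e3]; destruct (H2 i i2) as [e4|e4];
  rewrite ?e1, ?e2, ?e3, ?e4 in *; simpl in *; lia.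
Qed.

Lemma k2_fact (T1 : mat2) (i : I2) (be : nat) :
  is01 T1 -> k2 T1 i = be -> (T1 i i1 + T1 i i2 = be)%nat.
Proof.
  intros H1 h. unfold k2, nones, row in h; simpl in h.
  destruct (H1 i i1) as [e1|e1]; destruct (H1 i i2) as [e2|e2];
  rewrite ?e1, ?e2 in *; simpl in *; lia.
Qed.

Lemma gamma_ab (T1 T2 : mat2) (al be : nat) :
  (forall i, (T1 i i1 * T2 i i1 + T1 i i1 * T2 i i2 + T1 i i2 * T2 i i1 + T1 i i2 * T2 i i2 = al)%nat) ->
  (forall i, (T1 i i1 + T1 i i2 = be)%nat) ->
  forall n, (forall i, fst (gamma T1 T2 n) i = fst (ab al be n)) /\
            (forall i, snd (gamma T1 T2 n) i = snd (ab al be n)).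
Proof.
  intros HA HB n; induction n as [|n [IH1 IH2]]; simpl.
  - split; reflexivity.
  - destruct (gamma T1 T2 n) as [g1 g2]; destruct (ab al be n) as [a b]; simpl in *.
    split; intros i; rewrite ?IH1, ?IH2.
    + rewrite <- (HA i). ring.
    + rewrite <- (HB i). ring.
Qed.

Lemma ab_pos al be n : (1 <= al)%nat -> (1 <= be)%nat ->
  (1 <= fst (ab al be n))%nat /\ (1 <= snd (ab al be n))%nat.
Proof.
  intros Ha Hb; induction n as [|n IH]; simpl; [lia|].
  destruct (ab al be n) as [a b]; simpl in *.
  destruct IH as [I1 I2]; split; [apply (Nat.le_trans _ (1*1*1)); [lia| apply Nat.mul_le_mono; [apply Nat.mul_le_mono|]; lia] | apply (Nat.le_trans _ (1*1)); [lia| apply Nat.mul_le_mono; lia]].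
Qed.

Lemma En_l n : (En n + 2 = lseq (S (S n)))%nat.
Proof.
  induction n as [|n IH]; [reflexivity|].
  change (lseq (S (S (S n)))) with (lseq (S (S n)) + lseq (S n))%nat.
  replace (En (S n)) with (En n + lseq (S n))%nat by reflexivity. lia.
Qed.

Lemma lseq_pos k : (1 <= lseq k)%nat.
Proof.
  assert (forall k, (1 <= lseq k)%nat /\ (1 <= lseq (S k))%nat).
  { induction k0 as [|k0 [I1 I2]]; [simpl; lia|]. split; [exact I2|].
    change (lseq (S (S k0))) with (lseq (S k0) + lseq k0)%nat. lia. }
  apply H.
Qed.

Lemma En_ge n : (S n <= En n)%nat.
Proof.
  induction n as [|n IH]; [simpl; lia|].
  replace (En (S n)) with (En n + lseq (S n))%nat by reflexivity.
  pose proof (lseq_pos (S n)). lia.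
Qed.

Lemma fib_geom (w : nat -> R) (q : R) :
  q * q = q + 1 ->
  (forall n, w (S (S n)) = w (S n) + w n) -> w 1%nat = q * w 0%nat ->
  forall n, w n = w 0%nat * q ^ n.
Proof.
  intros Hq Hw H1.
  assert (forall n, w n = w 0%nat * q ^ n /\ w (S n) = w 0%nat * q ^ (S n)).
  { induction n as [|n [IH1 IH2]]; simpl.
    - split; [ring| rewrite H1; ring].
    - split; [exact IH2|]. rewrite Hw, IH1, IH2. simpl.
      replace (q * (q * q ^ n)) with ((q*q) * q^n) by ring. rewrite Hq. ring. }
  intro n; apply H.
Qed.

Lemma ab_S al be n : fst (ab al be (S n)) = (al * fst (ab al be n) * snd (ab al be n))%nat
  /\ snd (ab al be (S n)) = (be * fst (ab al be n))%nat.
Proof. simpl. destruct (ab al be n); simpl; split; reflexivity. Qed.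

Theorem theorem3 (T1 T2 : mat2) (alpha beta : nat) :
  is01 T1 -> is01 T2 -> no_zero_row T1 -> no_zero_row T2 ->
  nones (alpha_vec T1 T2 i1) = alpha -> nones (alpha_vec T1 T2 i2) = alpha ->
  (2 <= alpha)%nat ->
  k2 T1 i1 = beta -> k2 T1 i2 = beta ->
  entropy T1 T2 =
    Finite (((1 - lambar * (ln (INR beta) / ln (INR alpha))) / lam ^ 2) * ln (INR alpha))
  /\ (beta = alpha -> entropy T1 T2 = Finite (ln (INR alpha) / lam)).
Proof.
  intros H1 H2 Z1 Z2 A1 A2 Ha B1 B2.
  assert (HA : forall i, (T1 i i1 * T2 i i1 + T1 i i1 * T2 i i2 + T1 i i2 * T2 i i1 + T1 i i2 * T2 i i2 = alpha)%nat).
  { intros []; eapply row_facts; eauto. }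
  assert (HB : forall i, (T1 i i1 + T1 i i2 = beta)%nat).
  { intros []; eapply k2_fact; eauto. }
  assert (Hb : (1 <= beta)%nat).
  { destruct (Z1 i1) as [j Hj]. specialize (HB i1). destruct j; lia. }
  set (a := fun n => fst (ab alpha beta n)).
  set (b := fun n => snd (ab alpha beta n)).
  assert (apos : forall n, 0 < INR (a n)).
  { intro n. destruct (ab_pos alpha beta n) as [p _]; try lia. apply lt_0_INR. unfold a. lia. }
  assert (bpos : forall n, 0 < INR (b n)).
  { intro n. destruct (ab_pos alpha beta n) as [_ p]; try lia. apply lt_0_INR. unfold b. lia. }
  assert (alpos : 1 < INR alpha). { apply lt_1_INR. lia. }
  assert (bepos : 0 < INR beta). { apply lt_0_INR. lia. }
  assert (lnal : 0 < ln (INR alpha)). { rewrite <- ln_1. apply ln_increasing; lra. }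
  set (L := ln (INR alpha) + ln (INR beta)).
  set (u := fun n => ln (INR (a n)) + L).
  set (v := fun n => INR (lseq (S (S n)))).
  set (s := sqrt 5).
  assert (hs : s * s = 5). { apply sqrt_sqrt. lra. }
  assert (s0 : 0 <= s). { apply sqrt_pos. }
  assert (s2 : 2 < s) by nra.
  assert (s3 : s < 3) by nra.
  set (K := (ln (INR alpha) - lambar * ln (INR beta)) / lam ^ 2).
  assert (lam0 : lam ^ 2 <> 0). { unfold lam. fold s. nra. }
  assert (ufib : forall n, u (S (S n)) = u (S n) + u n).
  { intro n. unfold u, a.
    destruct (ab_S alpha beta (S n)) as [e1 _]. rewrite e1.
    destruct (ab_S alpha beta n) as [_ e2]. rewrite e2.
    rewrite !mult_INR, !ln_mult; try (apply Rmult_lt_0_compat); fold (a n) (a (S n)); try apply apos; try lra.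
    fold (b n). unfold L. ring.
    all: try (fold (a n)); try apply apos; try lra.
    all: fold (b (S n)); apply bpos. }
  assert (vfib : forall n, v (S (S n)) = v (S n) + v n).
  { intro n. unfold v. rewrite <- plus_INR. f_equal. }
  assert (u0 : u 0%nat = L). { unfold u, a. simpl. rewrite ln_1. ring. }
  assert (u1 : u 1%nat = ln (INR alpha) + L).
  { unfold u, a. simpl. rewrite !Nat.mul_1_r. reflexivity. }
  assert (v0 : v 0%nat = 3). { unfold v. simpl. lra. }
  assert (v1 : v 1%nat = 5). { unfold v. simpl. lra. }
  assert (lbq : lambar * lambar = lambar + 1). { unfold lambar. fold s. nra. }
  assert (Keq : K * (5 - 3 * lambar) = ln (INR alpha) + L - lambar * L).
  { assert (lam2 : lam ^ 2 = 2 - lambar). { unfold lam, lambar. fold s. nra. }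
    assert (e5 : 5 - 3 * lambar = lam ^ 2 * lam ^ 2). { rewrite lam2. nra. }
    rewrite e5.
    replace (K * (lam ^ 2 * lam ^ 2)) with ((ln (INR alpha) - lambar * ln (INR beta)) * lam ^ 2)
      by (unfold K; field; intro h0; apply lam0; rewrite h0; ring).
    rewrite lam2. unfold L.
    assert (ee : forall x y, (x - lambar * y) * (2 - lambar) = x + (x + y) - lambar * (x + y) + y * (lambar * lambar - lambar - 1)) by (intros; ring).
    rewrite ee, lbq. ring. }
  set (w := fun n => u n - K * v n).
  assert (wg : forall n, w n = w 0%nat * lambar ^ n).
  { apply fib_geom. exact lbq.
    intro n; unfold w; rewrite ufib, vfib; ring.
    unfold w. rewrite u0, u1, v0, v1. lra. }
  assert (Eu : forall n, INR (En n) = v n - 2).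
  { intro n. unfold v. rewrite <- En_l, plus_INR. simpl. lra. }
  assert (Ege : forall n, INR (S n) <= INR (En n)).
  { intro n. apply le_INR. apply En_ge. }
  assert (gm : forall n i, gamma1 T1 T2 i n = a n).
  { intros n i. unfold gamma1, a. apply (gamma_ab T1 T2 alpha beta HA HB n). }
  set (c := ln 2 - L + 2 * K).
  assert (Einf : is_lim_seq (fun n => INR (En n)) p_infty).
  { apply is_lim_seq_le_p_loc with (u := INR). exists 0%nat. intros n _.
    pose proof (Ege n). rewrite S_INR in H. lra. apply is_lim_seq_INR. }
  assert (Einv : is_lim_seq (fun n => / INR (En n)) 0).
  { change (Finite 0) with (Rbar_inv p_infty). apply is_lim_seq_inv. exact Einf. discriminate. }
  assert (lb1 : Rabs lambar < 1). { unfold lambar; fold s. apply Rabs_def1; lra. }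
  assert (Hlim : is_lim_seq (fun n => ln (INR (gamma1 T1 T2 i1 n + gamma1 T1 T2 i2 n)) / INR (En n)) K).
  { apply is_lim_seq_ext with (u := fun n => K + (w 0%nat * lambar ^ n + c) * / INR (En n)).
    { intro n. rewrite !gm, plus_INR.
      replace (INR (a n) + INR (a n)) with (2 * INR (a n)) by ring.
      rewrite ln_mult; [| lra | apply apos].
      assert (eu : ln (INR (a n)) = u n - L) by (unfold u; ring).
      rewrite eu. rewrite <- (wg n).
      assert (ev : u n = w n + K * v n) by (unfold w; ring).
      rewrite ev. replace (v n) with (INR (En n) + 2) by (rewrite Eu; ring).
      pose proof (Ege n). rewrite S_INR in H. pose proof (pos_INR n).
      unfold c. field. lra. }
    assert (HH : is_lim_seq (fun n => K + (w 0%nat * lambar ^ n + c) * / INR (En n)) (K + (w 0%nat * 0 + c) * 0)).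
    2: { replace (K + (w 0%nat * 0 + c) * 0) with K in HH by ring. exact HH. }
    apply is_lim_seq_plus'. apply is_lim_seq_const.
    apply is_lim_seq_mult'; [| exact Einv].
    apply is_lim_seq_plus'; [| apply is_lim_seq_const].
    apply is_lim_seq_mult'. apply is_lim_seq_const. apply is_lim_seq_geom. exact lb1. }
  assert (Hent : entropy T1 T2 = Finite K).
  { unfold entropy. apply is_LimSup_seq_unique. apply is_lim_LimSup_seq. exact Hlim. }
  split.
  - rewrite Hent. f_equal. unfold K. field. split; [lra|]. intro h0; apply lam0; rewrite h0; ring.
  - intro e. rewrite Hent. f_equal. unfold K. rewrite e.
    assert (l1 : 1 - lambar = lam) by (unfold lam, lambar; field).
    assert (lamn : lam <> 0) by (intro h0; apply lam0; rewrite h0; ring).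
    replace (ln (INR alpha) - lambar * ln (INR alpha)) with ((1 - lambar) * ln (INR alpha)) by ring.
    rewrite l1. field. exact lamn.
Qed.
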